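(* Let $n=p^a$ with $p$ prime and $a\in\mathbb{N}$. Then the number of distinct $n\times n$ principal reversible squares is $N_n=\binom{2a-1}{a}$.
   Context: A reversible square matrix is a real matrix $M=(M_{i,j})$ with indices $i,j\in\mathbb{Z}_n=\mathbb{Z}/n\mathbb{Z}$ (top-left entry index $(1,1)$, indices computed modulo $n$) such that (R) $M_{i,j}+M_{i,n+1-j}=M_{i,k}+M_{i,n+1-k}$ and $M_{i,j}+M_{n+1-i,j}=M_{k,j}+M_{n+1-k,j}$ for all $i,j,k$, and (V) $M_{i,j}+M_{k,l}=M_{i,l}+M_{k,j}$ for all $i,j,k,l$. An $n\times n$ principal reversible square is a reversible square matrix whose set of entries is exactly $\{1,\dots,n^2\}$, whose entries increase along each row and each column, and with $M_{1,1}=1$, $M_{1,2}=2$. *)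

(* Defs.v *)
(* Indices: paper index i in {1..n} corresponds to the
   ordinal i-1 : 'I_n; the paper's n+1-j corresponds to rev_ord j. *)
From mathcomp Require Import all_boot all_order all_algebra.
From mathcomp Require Import reals.
Set Implicit Arguments. Unset Strict Implicit. Unset Printing Implicit Defensive.
Import Order.TTheory GRing.Theory Num.Theory.
Local Open Scope ring_scope.

Section RevSq.
Variables (R : realType) (n : nat).

Definition rev_cond (M : 'M[R]_n) : Prop :=
  (forall i j k : 'I_n, M i j + M i (rev_ord j) = M i k + M i (rev_ord k)) /\
  (forall i j k : 'I_n, M i j + M (rev_ord i) j = M k j + M (rev_ord k) j).

Definition vert_cond (M : 'M[R]_n) : Prop :=
  forall i j k l : 'I_n, M i j + M k l = M i l + M k j.

Definition reversible_square (M : 'M[R]_n) : Prop := rev_cond M /\ vert_cond M.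

Definition principal_reversible_square (M : 'M[R]_n) : Prop :=
  reversible_square M /\
  [/\
      (forall i j : 'I_n, exists m : nat, (1 <= m <= n ^ 2)%N /\ M i j = m%:R),
      (forall m : nat, (1 <= m <= n ^ 2)%N -> exists i j : 'I_n, M i j = m%:R),
      (forall (i j k : 'I_n), (j < k)%N -> M i j < M i k) /\
      (forall (i j k : 'I_n), (i < k)%N -> M i j < M k j),
      (forall i j : 'I_n, val i = 0%N -> val j = 0%N -> M i j = 1) &
      (* M_{1,2} = 2 (paper indices, taken modulo n) *)
      (forall i j : 'I_n, val i = 0%N -> val j = (1 %% n)%N -> M i j = 2)].

End RevSq.

(* Main.v *)
Require Import Defs.
From mathcomp Require Import all_boot all_order all_algebra.
From mathcomp Require Import reals.
From mathcomp Require Import zify.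
Import Order.TTheory GRing.Theory Num.Theory.
Set Implicit Arguments. Unset Strict Implicit. Unset Printing Implicit Defensive.

Definition DS (N : nat) (A B : seq nat) : Prop :=
  [/\ forall a b, a \in A -> b \in B -> a + b < N,
      forall z, z < N -> exists a b, [/\ a \in A, b \in B & z = a + b] &
      forall a b a' b', a \in A -> b \in B -> a' \in A -> b' \in B ->
        a + b = a' + b' -> a = a'].

Lemma DS_sym N A B : DS N A B -> DS N B A.
Proof.
case=> Hb Hc Hu; split.
- by move=> a b aB bA; rewrite addnC; apply: Hb.
- by move=> z /Hc [a [b [aA bB ->]]]; exists b, a; rewrite addnC.
- move=> a b a' b' aB bA a'B b'A e.
  have := Hu b a b' a' bA aB b'A a'B; lia.
Qed.

Lemma DS_0 N A B : 0 < N -> DS N A B -> 0 \in A /\ 0 \in B.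
Proof.
move=> N0 [Hb Hc Hu]; have [a [b [aA bB e]]] := Hc 0 N0.
have a0 : a = 0 by lia.
have b0 : b = 0 by lia.
by rewrite -{1}a0 -b0.
Qed.

Lemma DS_size N A B : uniq A -> uniq B -> DS N A B -> size A * size B = N.
Proof.
move=> uA uB [Hb Hc Hu].
have uS : uniq [seq a + b | a <- A, b <- B].
  apply: allpairs_uniq => // [[a b] [a' b']] /allpairsP [[x y] [/= xA yB [-> ->]]].
  move=> /allpairsP [[x' y'] [/= x'A y'B [-> ->]]] /= e.
  have := Hu _ _ _ _ xA yB x'A y'B e => exx.
  by rewrite exx; congr pair; lia.
have eS : [seq a + b | a <- A, b <- B] =i iota 0 N.
  move=> z; rewrite mem_iota add0n /=; apply/idP/idP.
  - by move=> /allpairsP [[x y] [/= xA yB ->]]; apply: Hb.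
  - by move=> /Hc [a [b [aA bB ->]]]; apply: allpairs_f.
by rewrite -(size_allpairs addn) (perm_size (uniq_perm uS (iota_uniq 0 N) eS)) size_iota.
Qed.

Section Structure.
Variables (N m : nat) (A B : seq nat).
Hypothesis HDS : DS N A B.
Hypothesis A0 : 0 \in A.
Hypothesis B0 : 0 \in B.
Hypothesis mA : m \in A.
Hypothesis m0 : 0 < m.
Hypothesis mmin : forall a, a \in A -> 0 < a -> m <= a.

Lemma structure x : (x \in A -> m %| x) /\ (x < N -> (x \in B) = ((x - x %% m) \in B)).
Proof.
case: HDS => Hb Hc Hu.
suff H: forall k x, x < k -> (x \in A -> m %| x) /\ (x < N -> (x \in B) = ((x - x %% m) \in B)).
  exact: (H x.+1 x).
elim=> // k IH {}x ltxk.
have IHx : forall z, z < x -> (z \in A -> m %| z) /\ (z < N -> (z \in B) = ((z - z %% m) \in B)).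
  by move=> z hz; apply: IH; lia.
case r0: (x %% m == 0).
  split; first by move=> _; rewrite /dvdn r0.
  by rewrite (eqP r0) subn0.
have xAN : x \in A -> x < N by move=> xA; have := Hb _ _ xA B0; rewrite addn0.
suff Hkey : x < N -> (x \in A -> False) /\ ((x \in B) = ((x - x %% m) \in B)).
  split; last by move=> /Hkey [].
  by move=> xA; case: (Hkey (xAN xA)) => /(_ xA).
move=> xN.
have rm : x %% m < m by apply: ltn_pmod.
case y0: (x - x %% m == 0).
  have xm : x < m by move: (eqP y0) rm; lia.
  split.
    have xpos : 0 < x by move: r0; case: (x) => //; rewrite mod0n.
    by move=> xA; have := mmin xA xpos; lia.
  rewrite (eqP y0) B0.
  have [a [b [aA bB e]]] := Hc x xN.
  case a0: (a == 0); first by move: bB; rewrite (eqP a0) add0n in e; rewrite -e.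
  have := mmin aA; lia.
have hx : x = x %/ m * m + x %% m := divn_eq x m.
move: (x %/ m) (x %% m) hx y0 r0 rm => q r hx y0 r0 rm.
have hy : x - r = q * m by rewrite hx addnK.
rewrite hy in y0 *.
have rpos : 0 < r by rewrite lt0n r0.
have yN : q * m < N by clear -hx xN; lia.
have [a' [b' [a'A b'B ea]]] := Hc _ yN.
have [ka hka] : exists ka, a' = ka * m.
  have a'x : a' < x by clear -ea hx rpos; lia.
  have /dvdnP [ka ->] := (IHx a' a'x).1 a'A; by exists ka.
have qm : 1 <= q by apply/negP => /negP; rewrite -ltnNge ltnS leqn0 => /eqP q0; rewrite q0 in y0.
case a0: (a' == 0).
  have a0' : a' = 0 by apply/eqP.
  have yB : q * m \in B by rewrite ea a0' add0n.
  have xnA : x \in A -> False.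
    move=> xA.
    have mrB : m - r \in B.
      have mrx : m - r < x by clear -qm hx rm rpos; nia.
      have := (IHx (m - r) mrx).2 ltac:(clear -mrx xN; lia).
      have -> : (m - r) %% m = m - r by apply: modn_small; clear -rpos rm; lia.
      by rewrite subnn B0.
    have e1 : x + (m - r) = m + q * m by rewrite hx; clear -rm; lia.
    have := Hu _ _ _ _ xA mrB mA yB e1.
    move=> exm; clear -exm hx rm rpos qm; nia.
  split => //.
  rewrite yB.
  have [a [b [aA bB e]]] := Hc x xN.
  case ax: (a == x); first by exfalso; apply: xnA; rewrite -(eqP ax).
  have ax' : a < x by move: ax => /negbT; clear -e; lia.
  have [ka2 hka2] : exists k, a = k * m.
    have /dvdnP [kk ->] := (IHx a ax').1 aA; by exists kk.
  case a00: (a == 0); first by rewrite e (eqP a00) add0n.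
  have a0p : 0 < a by rewrite lt0n a00.
  have bx : b < x by clear -e a0p; lia.
  have bN : b < N by clear -e xN; lia.
  have := (IHx b bx).2 bN; rewrite bB => /esym bmB.
  have kq : ka2 <= q.
    rewrite leqNgt; apply/negP => h.
    have : q.+1 * m <= ka2 * m by rewrite leq_mul2r h orbT.
    rewrite mulSn; clear -ax' hka2 hx rm; lia.
  have hb : b = (q - ka2) * m + r.
    have : ka2 * m <= q * m by rewrite leq_mul2r kq orbT.
    rewrite mulnBl; clear -e hka2 hx; lia.
  have hbm : b %% m = r by rewrite hb modnMDl modn_small.
  rewrite hbm in bmB.
  have e2 : a + (b - r) = 0 + q * m by rewrite hb addnK hka2 -mulnDl subnKC.
  have := Hu _ _ _ _ aA bmB A0 yB e2.
  move=> a00'; by rewrite a00' eqxx in a00.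
have a'pos : 0 < a' by rewrite lt0n a0.
have b'r : b' + r \in B.
  have b'x : b' + r < x by clear -ea hx a'pos; lia.
  have := (IHx (b' + r) b'x).2 ltac:(clear -b'x xN; lia).
  have kq : ka <= q by rewrite -(leq_pmul2r m0); clear -ea hka; lia.
  have hb : b' + r = (q - ka) * m + r.
    have : ka * m <= q * m by rewrite leq_mul2r kq orbT.
    rewrite mulnBl; clear -ea hka; lia.
  have hbm : (b' + r) %% m = r by rewrite hb modnMDl modn_small.
  by rewrite hbm addnK b'B.
split.
  move=> xA; have e1 : x + 0 = a' + (b' + r) by rewrite addn0 hx ea addnA.
  have := Hu _ _ _ _ xA B0 a'A b'r e1; clear -hx ea rpos; lia.
have xnB : x \in B = false.
  apply/negP => xB; have e1 : 0 + x = a' + (b' + r) by rewrite add0n hx ea addnA.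
  have := Hu _ _ _ _ A0 xB a'A b'r e1; clear -a'pos; lia.
have ynB : q * m \in B = false.
  apply/negP => yB; have e1 : 0 + q * m = a' + b' by rewrite add0n.
  have := Hu _ _ _ _ A0 yB a'A b'B e1; clear -a'pos; lia.
by rewrite xnB ynB.
Qed.

Lemma struct_dvd : m %| N.
Proof.
have [Hb Hc Hu] := HDS.
have N0 : m < N by have := Hb _ _ mA B0; rewrite addn0.
apply/negPn/negP => ndv.
have R0 : 0 < N %% m by rewrite lt0n.
have Rm : N %% m < m by apply: ltn_pmod.
have [a [b [aA bB e]]] := Hc N.-1 ltac:(lia).
have /dvdnP [ka hka] := (structure a).1 aA.
have hN : N = N %/ m * m + N %% m := divn_eq N m.
have hbm : b %% m = N %% m - 1.
  have -> : b %% m = (N.-1) %% m by rewrite e hka modnMDl.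
  have -> : N.-1 = N %/ m * m + (N %% m - 1) by lia.
  by rewrite modnMDl modn_small //; lia.
have b0B : b - b %% m \in B by rewrite -(structure b).2 //; lia.
have hb : b = b %/ m * m + b %% m := divn_eq b m.
case a0: (a == 0).
  have := Hb _ _ mA b0B; rewrite hbm; lia.
have an0 : a != 0 by rewrite a0.
have zN : b + 1 < N by lia.
have zm : (b + 1) %% m = N %% m.
  by rewrite hb -addnA hbm modnMDl modn_small; lia.
have zB : b + 1 \in B.
  by rewrite (structure (b + 1)).2 // zm; have -> : b + 1 - N %% m = b - b %% m by lia.
have := Hb _ _ aA zB; lia.
Qed.
End Structure.

Definition mulset (m N : nat) (A' : seq nat) := [seq z <- iota 0 N | (m %| z) && (z %/ m \in A')].
Definition blkset (m N : nat) (B' : seq nat) := [seq z <- iota 0 N | z %/ m \in B'].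

Definition symm (L : seq nat) := exists c, forall z, (z \in L) = (z <= c) && (c - z \in L).

Lemma sorted_uniq_ltn (s : seq nat) : sorted ltn s -> uniq s.
Proof. by rewrite ltn_sorted_uniq_leq => /andP []. Qed.

Section Build.
Variables (m N' : nat) (A' B' : seq nat).
Hypothesis m0 : 0 < m.
Hypothesis HA : forall q, q \in A' -> q < N'.
Hypothesis HB : forall q, q \in B' -> q < N'.

Lemma mulset_mem z : (z \in mulset m (m * N') A') = (m %| z) && (z %/ m \in A').
Proof.
rewrite /mulset mem_filter mem_iota add0n /=.
case: (boolP (m %| z)) => //= /dvdnP [q ->]; rewrite mulnK //.
case qA: (q \in A'); rewrite ?andbF ?andbT //.
by have := HA qA; rewrite mulnC ltn_pmul2l.
Qed.

Lemma mulset_memq q : (q * m \in mulset m (m * N') A') = (q \in A').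
Proof. by rewrite mulset_mem dvdn_mull // mulnK. Qed.

Lemma blkset_mem z : (z \in blkset m (m * N') B') = (z %/ m \in B').
Proof.
rewrite /blkset mem_filter mem_iota add0n /=.
case qB: (z %/ m \in B'); rewrite ?andbF ?andbT //.
have := HB qB; rewrite ltn_divLR // mulnC; by [].
Qed.

Lemma mulset_sorted : sorted ltn (mulset m (m * N') A').
Proof. by apply: sorted_filter; [apply: ltn_trans | apply: iota_ltn_sorted]. Qed.

Lemma blkset_sorted : sorted ltn (blkset m (m * N') B').
Proof. by apply: sorted_filter; [apply: ltn_trans | apply: iota_ltn_sorted]. Qed.

Lemma mulset_map : sorted ltn A' -> mulset m (m * N') A' = [seq q * m | q <- A'].
Proof.
move=> sA; apply: (irr_sorted_eq ltn_trans ltnn mulset_sorted).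
  by apply: homo_sorted sA => a b ab; rewrite ltn_pmul2r.
move=> z; rewrite mulset_mem; apply/idP/mapP.
  by move=> /andP [/dvdnP [q ->]]; rewrite mulnK // => qA; exists q.
by move=> [q qA ->]; rewrite dvdn_mull // mulnK.
Qed.

Lemma DS_build : DS N' A' B' -> DS (m * N') (mulset m (m * N') A') (blkset m (m * N') B').
Proof.
case=> Hb Hc Hu; split.
- move=> a b; rewrite mulset_mem blkset_mem => /andP [/dvdnP [q ->]].
  rewrite mulnK // => qA bB.
  have := Hb _ _ qA bB => h.
  have hb := divn_eq b m.
  have bm : b %% m < m by apply: ltn_pmod.
  have : (q + b %/ m).+1 * m <= N' * m by rewrite leq_mul2r h orbT.
  rewrite mulSn mulnDl; lia.
- move=> z zN.
  have hz := divn_eq z m.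
  have zm : z %/ m < N' by rewrite ltn_divLR // mulnC.
  have [a [b [aA bB e]]] := Hc _ zm.
  exists (a * m), (b * m + z %% m); split.
  + by rewrite mulset_memq.
  + by rewrite blkset_mem divnMDl // divn_small ?addn0 // ltn_pmod.
  + by rewrite {1}hz e mulnDl addnA.
- move=> a b a' b'; rewrite !mulset_mem !blkset_mem.
  move=> /andP [/dvdnP [q ->]]; rewrite mulnK // => qA bB.
  move=> /andP [/dvdnP [q' ->]]; rewrite mulnK // => q'A b'B e.
  have hb := divn_eq b m; have hb' := divn_eq b' m.
  have em : b %% m = b' %% m.
    have : (q * m + b) %% m = (q' * m + b') %% m by rewrite e.
    by rewrite !modnMDl.
  have e2 : (q + b %/ m) * m = (q' + b' %/ m) * m by rewrite !mulnDl; lia.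
  have e3 : q + b %/ m = q' + b' %/ m by apply/eqP; rewrite -(eqn_pmul2r m0) e2.
  by rewrite (Hu _ _ _ _ qA bB q'A b'B e3).
Qed.

Lemma symm_mulset : symm A' -> symm (mulset m (m * N') A').
Proof.
move=> [c Hc]; exists (c * m) => z; rewrite !mulset_mem.
apply/idP/idP.
  move=> /andP [/dvdnP [q ->]]; rewrite mulnK // => qA.
  move: (qA); rewrite Hc => /andP [qc cqA].
  rewrite leq_mul2r qc orbT /= -mulnBl dvdn_mull // mulnK //.
move=> /andP [zc /andP [dv cA]].
have dz : m %| z.
  have -> : z = c * m - (c * m - z) by lia.
  by apply: dvdn_sub; rewrite ?dvdn_mull.
move: dz zc cA => /dvdnP [q ->] zc; rewrite -mulnBl mulnK // => cqA.
rewrite dvdn_mull //= mulnK // Hc.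
rewrite leq_mul2r in zc; move: zc; rewrite gtn_eqF //= => qc.
by rewrite qc.
Qed.

Lemma symm_blkset : symm B' -> symm (blkset m (m * N') B').
Proof.
move=> [c Hc]; exists (c * m + (m - 1)) => z; rewrite !blkset_mem.
have hz := divn_eq z m.
have zm : z %% m < m by apply: ltn_pmod.
move: (z %/ m) (z %% m) hz zm => q r -> rm.
apply/idP/idP.
  move=> qB; move: (qB); rewrite Hc => /andP [qc cqB].
  have -> : c * m + (m - 1) - (q * m + r) = (c - q) * m + (m - 1 - r).
    have : q * m <= c * m by rewrite leq_mul2r qc orbT.
    rewrite mulnBl; lia.
  rewrite divnMDl // divn_small ?addn0; last by lia.
  rewrite cqB andbT.
  have : q * m <= c * m by rewrite leq_mul2r qc orbT.
  lia.
move=> /andP [zc cB].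
have qc : q <= c.
  rewrite leqNgt; apply/negP => h.
  have : c.+1 * m <= q * m by rewrite leq_mul2r h orbT.
  rewrite mulSn; lia.
have e : c * m + (m - 1) - (q * m + r) = (c - q) * m + (m - 1 - r).
  have : q * m <= c * m by rewrite leq_mul2r qc orbT.
  rewrite mulnBl; lia.
rewrite e divnMDl // divn_small ?addn0 in cB; last by lia.
by rewrite Hc qc cB.
Qed.

End Build.

Lemma allpairs_uniq_simple (S T R : eqType) (f : S -> T -> R) (s : seq S) (t : S -> seq T) :
  uniq s -> (forall x, x \in s -> uniq (t x)) ->
  (forall x x' y y', x \in s -> x' \in s -> y \in t x -> y' \in t x' ->
     f x y = f x' y' -> x = x' /\ y = y') ->
  uniq [seq f x y | x <- s, y <- t x].
Proof.
move=> us ut inj; apply: allpairs_uniq_dep => //.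
move=> [x y] [x' y'] /allpairsPdep [x1 [y1 [x1s y1t e1]]].
move=> /allpairsPdep [x2 [y2 [x2s y2t e2]]] /= e.
case: e1 => ??; subst x1 y1; case: e2 => ??; subst x2 y2.
by have [-> ->] := inj _ _ _ _ x1s x2s y1t y2t e.
Qed.

Lemma DS_lt N A B : 0 < N -> DS N A B -> (forall a, a \in A -> a < N) /\ (forall b, b \in B -> b < N).
Proof.
move=> N0 HD; have [A0 B0] := DS_0 N0 HD; case: HD => Hb _ _; split.
  by move=> a aA; have := Hb _ _ aA B0; rewrite addn0.
by move=> b bB; have := Hb _ _ A0 bB.
Qed.

Lemma hockey x y : sumn [seq 'C(j + x, j) | j <- iota 0 y] = 'C(x + y, x.+1).
Proof.
elim: y => [|y IH]; first by rewrite /= addn0 bin_small.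
rewrite -addn1 iotaD map_cat sumn_cat IH /= add0n addn0.
rewrite addn1 addnS binS; congr (_ + _).
by rewrite [x + y]addnC -(bin_sub (leq_addl y x)) addnK.
Qed.

Section Dec.
Variable p : nat.
Hypothesis hp : prime p.

Let p1 : 1 < p := prime_gt1 hp.
Let pX0 k : 0 < p ^ k.
Proof. by rewrite expn_gt0 (ltnW p1). Qed.

Definition build (x j k : nat) (BA : seq nat * seq nat) :=
  (mulset (p ^ k) (p ^ k * p ^ (j + x)) BA.2, blkset (p ^ k) (p ^ k * p ^ (j + x)) BA.1).

Fixpoint dec (f x y : nat) {struct f} : seq (seq nat * seq nat) :=
  match x with
  | 0 => [:: ([:: 0], iota 0 (p ^ y))]
  | x'.+1 => match f with
     | 0 => [::]
     | f'.+1 => [seq build x j (y - j) BA | j <- iota 0 y, BA <- dec f' j x]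
     end
  end.

Definition Spec x y (A B : seq nat) :=
  [/\ sorted ltn A, sorted ltn B, DS (p ^ (x + y)) A B, size A = p ^ x /\ size B = p ^ y &
      (x == 0) || (1 \in B)].

Lemma base_sound y : Spec 0 y [:: 0] (iota 0 (p ^ y)) /\ symm [:: 0] /\ symm (iota 0 (p ^ y))
  /\ (0 < y -> 1 \in iota 0 (p ^ y)).
Proof.
split; [split => // | split; [|split]].
- exact: iota_ltn_sorted.
- split.
  + by move=> a b; rewrite inE mem_iota => /eqP -> /andP [_]; rewrite add0n.
  + by move=> z zN; exists 0, z; rewrite inE mem_iota add0n zN.
  + by move=> a b a' b'; rewrite !inE => /eqP -> _ /eqP ->.
- by rewrite size_iota.
- by exists 0 => z; rewrite !inE; case: z.
- exists (p ^ y).-1 => z; rewrite !mem_iota !add0n.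
  have := pX0 y => pp; apply/idP/idP => [h|/andP [h _]]; [apply/andP; split|]; lia.
- move=> y0; rewrite mem_iota add0n /=.
  have : p ^ 1 <= p ^ y by rewrite leq_pexp2l; lia.
  lia.
Qed.

Lemma dec_sound f x y A B : x + y <= f -> (A, B) \in dec f x y ->
  Spec x y A B /\ symm A /\ symm B /\ (0 < y -> 1 \in B).
Proof.
elim: f x y A B => [|f IH] [|x] y A B hf //=.
- by rewrite inE => /eqP [-> ->]; apply: base_sound.
- by rewrite inE => /eqP [-> ->]; apply: base_sound.
move=> /allpairsPdep [j [[B1 A1] [jI BAin [-> ->]]]] /=.
rewrite mem_iota add0n in jI.
have hf' : j + x.+1 <= f by lia.
have [[sB1 sA1 DS1 [szB1 szA1] _] [symB1 [symA1 oneA1]]] := IH _ _ _ _ hf' BAin.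
set m := p ^ (y - j); set N' := p ^ (j + x.+1).
have m1 : 1 < m.
  have : p ^ 1 <= p ^ (y - j) by rewrite leq_pexp2l; lia.
  rewrite /m; lia.
have m0 : 0 < m by lia.
have DS1' := DS_sym DS1.
have [HA HB] := DS_lt (pX0 _) DS1'.
have eN : p ^ (x.+1 + y) = m * N' by rewrite -expnD; congr (p ^ _); lia.
have DSb : DS (p ^ (x.+1 + y)) (mulset m (m * N') A1) (blkset m (m * N') B1).
  by rewrite eN; apply: DS_build.
have szA : size (mulset m (m * N') A1) = p ^ x.+1 by rewrite mulset_map // size_map.
have [_ B10] := DS_0 (pX0 _) DS1'.
have oneB : 1 \in blkset m (m * N') B1 by rewrite blkset_mem // divn_small.
split; [split => // | split; [|split]].
- exact: mulset_sorted.
- exact: blkset_sorted.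
- split => //.
  have := DS_size (sorted_uniq_ltn (mulset_sorted _ _ _)) (sorted_uniq_ltn (blkset_sorted _ _ _)) DSb.
  rewrite szA expnD => /eqP; rewrite eqn_pmul2l //; by move/eqP.
- exact: (symm_mulset m0 HA symA1).
- exact: (symm_blkset m0 HB symB1).
- by move=> _.
Qed.


Lemma base_complete y A B : Spec 0 y A B -> A = [:: 0] /\ B = iota 0 (p ^ y).
Proof.
move=> [sA sB HD [szA szB] _].
have [A0 B0] := DS_0 (pX0 _) HD.
have eA : A = [:: 0].
  move: sA szA A0; rewrite expn0 => _.
  by case: (A) => [|a [|a' A']] //= _; rewrite inE => /eqP <-.
split => //.
apply: (irr_sorted_eq ltn_trans ltnn sB (iota_ltn_sorted 0 _)) => z.
rewrite mem_iota add0n; case: HD => Hb Hc _.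
apply/idP/idP.
  by move=> zB; have := Hb _ _ A0 zB; rewrite add0n.
move=> /Hc [a [b [aA bB ->]]]; move: aA; rewrite eA inE => /eqP ->.
by rewrite add0n.
Qed.

Lemma dec_complete f x y A B : x + y <= f -> Spec x y A B -> (A, B) \in dec f x y.
Proof.
elim: f x y A B => [|f IH] [|x] y A B hf HS.
- by have [-> ->] := base_complete HS; rewrite /= inE.
- by move: hf; rewrite addSn.
- by have [-> ->] := base_complete HS; rewrite /= inE.
move: HS => [sA sB HD [szA szB] /= oneB].
have N0 := pX0 (x.+1 + y).
have [A0 B0] := DS_0 N0 HD.
have [HAN HBN] := DS_lt N0 HD.
have uA := sorted_uniq_ltn sA.
have pxx : 1 < p ^ x.+1.
  have : p ^ 1 <= p ^ x.+1 by rewrite (leq_pexp2l (ltnW p1)).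
  by rewrite expn1; apply: leq_trans p1.
have exP : exists z, (0 < z) && (z \in A).
  case: (boolP (has (fun z => 0 < z) A)) => [/hasP [z zA zpos]|/hasPn hn].
    by exists z; rewrite zpos zA.
  have sub : {subset A <= [:: 0]}.
    by move=> z zA; have := hn z zA; rewrite inE -eqn0Ngt.
  have := uniq_leq_size uA sub; rewrite szA /=; clear -pxx; lia.
case: (ex_minnP exP) => m /andP [m0 mA] mmin.
have mmin' : forall a, a \in A -> 0 < a -> m <= a.
  by move=> a aA ap; apply: mmin; rewrite ap aA.
have [Hb Hc Hu] := HD.
have mn1 : m != 1.
  apply/eqP => e1; have := Hu 1 0 0 1 ltac:(by rewrite -e1) B0 A0 oneB erefl; by [].
have struct := structure HD A0 B0 mA m0 mmin'.
have dv := struct_dvd HD A0 B0 mA m0 mmin'.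
set N := p ^ (x.+1 + y) in HD Hb Hc Hu N0 HAN HBN struct dv *.
set N1 := N %/ m.
have eN : N = m * N1 by rewrite mulnC divnK.
set A1 := [seq q <- iota 0 N1 | q * m \in A].
set B1 := [seq q <- iota 0 N1 | q * m \in B].
have memA1 q : (q \in A1) = (q < N1) && (q * m \in A).
  by rewrite mem_filter mem_iota add0n andbC.
have memB1 q : (q \in B1) = (q < N1) && (q * m \in B).
  by rewrite mem_filter mem_iota add0n andbC.
have HA1 q : q \in A1 -> q < N1 by rewrite memA1 => /andP [].
have HB1 q : q \in B1 -> q < N1 by rewrite memB1 => /andP [].
have sA1 : sorted ltn A1 by apply: sorted_filter; [apply: ltn_trans | apply: iota_ltn_sorted].
have sB1 : sorted ltn B1 by apply: sorted_filter; [apply: ltn_trans | apply: iota_ltn_sorted].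
have ltN q : (q * m < N) = (q < N1) by rewrite eN mulnC ltn_pmul2l.
have eA : A = mulset m (m * N1) A1.
  apply: (irr_sorted_eq ltn_trans ltnn sA (mulset_sorted _ _ _)) => z.
  rewrite mulset_mem //; apply/idP/idP.
    move=> zA; have /dvdnP [q qe] := (struct z).1 zA.
    rewrite qe dvdn_mull // mulnK // memA1 -qe zA andbT -ltN -qe.
    exact: HAN.
  by move=> /andP [/dvdnP [q ->]]; rewrite mulnK // memA1 => /andP [_ ->].
have eB : B = blkset m (m * N1) B1.
  apply: (irr_sorted_eq ltn_trans ltnn sB (blkset_sorted _ _ _)) => z.
  rewrite blkset_mem // memB1.
  have hz := divn_eq z m.
  have e1 : z - z %% m = z %/ m * m by rewrite {1}hz addnK.
  apply/idP/idP.
    move=> zB; have zN := HBN _ zB.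
    rewrite -ltN -e1 -(struct z).2 // zB andbT.
    exact: leq_ltn_trans (leq_subr _ _) zN.
  move=> /andP [q1 qB].
  have zN : z < N by rewrite eN mulnC -ltn_divLR.
  by rewrite (struct z).2 // e1.
have DS1 : DS N1 A1 B1.
  split.
  - move=> q q'; rewrite memA1 memB1 => /andP [_ qA] /andP [_ q'B].
    by have := Hb _ _ qA q'B; rewrite -mulnDl ltN.
  - move=> z zN1.
    have zN : z * m < N by rewrite ltN.
    have [a [b [aA bB e]]] := Hc _ zN.
    have /dvdnP [ka hka] := (struct a).1 aA.
    have kz : ka <= z by rewrite -(leq_pmul2r m0); clear -e hka; lia.
    have hb : b = (z - ka) * m by rewrite mulnBl; clear -e hka; lia.
    exists ka, (z - ka); split.
    + by rewrite memA1 -hka aA andbT; clear -kz zN1; lia.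
    + by rewrite memB1 -hb bB andbT; clear -zN1; lia.
    + clear -kz; lia.
  - move=> q q' r r'; rewrite !memA1 !memB1.
    move=> /andP [_ qA] /andP [_ q'B] /andP [_ rA] /andP [_ r'B] e.
    have : q * m = r * m by apply: (Hu _ _ _ _ qA q'B rA r'B); rewrite -!mulnDl e.
    by move/eqP; rewrite eqn_pmul2r // => /eqP.
have szA1 : size A1 = p ^ x.+1 by rewrite -szA eA mulset_map // size_map.
have uA1 := sorted_uniq_ltn sA1.
have uB1 := sorted_uniq_ltn sB1.
have szp := DS_size uA1 uB1 DS1.
have epy : p ^ y = m * size B1.
  have : p ^ x.+1 * p ^ y = p ^ x.+1 * (m * size B1).
    by rewrite -expnD -/N eN -szp szA1 mulnCA.
  by move/eqP; rewrite eqn_pmul2l // => /eqP.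
have : m %| p ^ y by rewrite epy dvdn_mulr.
case/(dvdn_pfactor _ _ hp) => k ky em.
have k0 : 0 < k by case: k ky em mn1 => // _ ->.
set j := y - k.
have szB1 : size B1 = p ^ j.
  have : m * size B1 = m * p ^ j by rewrite -epy em -expnD /j subnKC.
  by move/eqP; rewrite eqn_pmul2l // => /eqP.
have eN1 : N1 = p ^ (j + x.+1) by rewrite -szp szA1 szB1 expnD mulnC.
have oneA1 : 1 \in A1.
  rewrite memA1 mul1n mA andbT eN1.
  have : p ^ 1 <= p ^ (j + x.+1) by apply: (leq_pexp2l (ltnW p1)); rewrite addnS.
  by rewrite expn1; apply: leq_trans p1.
have HS1 : Spec j x.+1 B1 A1.
  split => //; last by rewrite oneA1 orbT.
  by rewrite -eN1; apply: DS_sym.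
have hj : j + x.+1 <= f by rewrite /j; clear -hf k0 ky; lia.
have := IH j x.+1 B1 A1 hj HS1 => BAin.
apply/allpairsPdep; exists j, (B1, A1); split => //.
  by rewrite mem_iota add0n /j; clear -k0 ky; lia.
rewrite /build /= (_ : y - j = k); last by rewrite /j subKn.
by rewrite -em -eN1 -eA -eB.
Qed.

Lemma dec_uniq f x y : x + y <= f -> uniq (dec f x y).
Proof.
elim: f x y => [|f IH] [|x] y hf //=.
apply: allpairs_uniq_simple.
- exact: iota_uniq.
- by move=> j; rewrite mem_iota => /andP [_ jy]; apply: IH; lia.
move=> j j' [B1 A1] [B2 A2]; rewrite !mem_iota => /andP [_ jy] /andP [_ j'y] in1 in2.
have [[sB1 sA1 DS1 _ _] [_ [_ one1]]] := dec_sound (ltac:(lia) : j + x.+1 <= f) in1.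
have [[sB2 sA2 DS2 _ _] [_ [_ one2]]] := dec_sound (ltac:(lia) : j' + x.+1 <= f) in2.
have [HA1 HB1] := DS_lt (pX0 _) (DS_sym DS1).
have [HA2 HB2] := DS_lt (pX0 _) (DS_sym DS2).
rewrite /build /= => [[eA eB]].
have mk1 : p ^ (y - j) \in mulset (p ^ (y - j)) (p ^ (y - j) * p ^ (j + x.+1)) A1.
  by rewrite -{1}(mul1n (p ^ (y - j))) mulset_memq // one1.
have mk2 : p ^ (y - j') \in mulset (p ^ (y - j')) (p ^ (y - j') * p ^ (j' + x.+1)) A2.
  by rewrite -{1}(mul1n (p ^ (y - j'))) mulset_memq // one2.
rewrite eA mulset_mem // dvdn_Pexp2l // in mk1.
rewrite -eA mulset_mem // dvdn_Pexp2l // in mk2.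
move: mk1 mk2 => /andP [l1 _] /andP [l2 _].
have ejj : j = j' by lia.
subst j'.
split => //; congr pair.
  apply: (irr_sorted_eq ltn_trans ltnn sB1 sB2) => q.
  have := blkset_mem (pX0 (y - j)) HB1 (q * p ^ (y - j)); rewrite mulnK // => <-.
  by rewrite eB blkset_mem // mulnK.
apply: (irr_sorted_eq ltn_trans ltnn sA1 sA2) => q.
by rewrite -(mulset_memq (pX0 (y - j)) HA1 q) eA mulset_memq.
Qed.

Lemma dec_size f x y : x + y <= f -> size (dec f x y) = 'C((x + y).-1, x).
Proof.
elim: f x y => [|f IH] [|x] y hf /=; [by rewrite bin0 | lia | by rewrite bin0 |].
rewrite size_allpairs_dep.
have -> : [seq size (dec f j x.+1) | j <- iota 0 y] = [seq 'C(j + x, j) | j <- iota 0 y].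
  apply/eq_in_map => j; rewrite mem_iota => /andP [_ jy].
  by rewrite IH ?addnS //; lia.
by rewrite hockey ?addSn.
Qed.

End Dec.

Lemma nth0_0 (s : seq nat) : sorted ltn s -> 0 \in s -> nth 0 s 0 = 0.
Proof.
case: s => [|h t] //= st; rewrite inE => /predU1P [-> //|zt].
have := order_path_min ltn_trans st => /allP /(_ _ zt); by [].
Qed.

Lemma nth1_1 (s : seq nat) : sorted ltn s -> 0 \in s -> 1 \in s -> nth 0 s 1 = 1.
Proof.
move=> st z o; have := nth0_0 st z.
case: s st z o => [|h [|h' t]] //= st _; rewrite !inE /= => o e; subst h.
  by move: o.
move: st => /andP [h'0 st].
move: o => /predU1P [e1|/predU1P [-> //|ot]]; first by lia.
by have := order_path_min ltn_trans st => /allP /(_ _ ot) /=; lia.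
Qed.

Lemma symnth (L : seq nat) : sorted ltn L -> symm L ->
  exists c, forall i, i < size L -> nth 0 L i + nth 0 L (size L - i.+1) = c.
Proof.
move=> sL [c Hc]; exists c => i iL.
have le_c z : z \in L -> z <= c by rewrite Hc => /andP [].
set L' := rev [seq c - z | z <- L].
have eL : L' = L.
  apply: (irr_sorted_eq ltn_trans ltnn) => //.
    rewrite /L' rev_sorted.
    apply: (homo_sorted_in (e := ltn) (P := [pred z | z <= c])) => //.
      by move=> u v; rewrite !inE /= => uc vc uv; lia.
    by apply/allP => z /le_c.
  move=> z; rewrite /L' mem_rev; apply/mapP/idP.
    by move=> [w wL ->]; move: (wL); rewrite Hc => /andP [].
  move=> zL; exists (c - z); last by have := le_c _ zL; lia.
  by move: zL; rewrite Hc => /andP [].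
have := congr1 (fun s => nth 0 s i) eL; rewrite /L' nth_rev size_map // (nth_map 0); last first.
  lia.
move=> <-; have : nth 0 L (size L - i.+1) \in L.
  by apply: mem_nth; rewrite ltn_subrL ltn0Sn (leq_ltn_trans (leq0n i) iL).
move/le_c; lia.
Qed.

Definition ent (AB : seq nat * seq nat) (i j : nat) : nat := (nth 0 AB.1 i + nth 0 AB.2 j).+1.

Local Open Scope ring_scope.

Definition mx (R : realType) (n : nat) (AB : seq nat * seq nat) : 'M[R]_n :=
  \matrix_(i < n, j < n) (ent AB i j)%:R.

Section Mat.
Variables (R : realType) (p a : nat).
Hypothesis hp : prime p.
Hypothesis a0 : (0 < a)%N.

Let n := (p ^ a)%N.
Let n2 : (1 < n)%N.
Proof.
have p1 := prime_gt1 hp.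
have : (p ^ 1 <= p ^ a)%N by rewrite leq_pexp2l; lia.
rewrite /n; lia.
Qed.
Let n0 : (0 < n)%N. Proof. by have := n2; lia. Qed.
Let eN : (p ^ (a + a) = n ^ 2)%N. Proof. by rewrite expnD /n expnS expn1. Qed.

Lemma spec_prs A B : Spec p a a A B -> symm A -> symm B ->
  principal_reversible_square (mx R n (A, B)).
Proof.
move=> [sA sB HD [szA szB] cond] symA symB.
have B1 : 1%N \in B by move: cond; rewrite (negbTE (lt0n_neq0 a0)).
rewrite -/n in szA szB.
have N0 : (0 < n ^ 2)%N by rewrite expn_gt0 n0.
rewrite eN in HD.
have [A0 B0] := DS_0 N0 HD.
have [Hb Hc Hu] := HD.
have [cA hA] := symnth sA symA.
have [cB hB] := symnth sB symB.
rewrite szA in hA; rewrite szB in hB.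
have iA (i : 'I_n) : (i < size A)%N by rewrite szA.
have iB (i : 'I_n) : (i < size B)%N by rewrite szB.
have A00 := nth0_0 sA A0.
have B00 := nth0_0 sB B0.
have B11 := nth1_1 sB B0 B1.
split; [split; [split|] | split].
- move=> i j k; rewrite !mxE /ent /= -!natrD; congr (_%:R).
  have := hB j (ltn_ord j); have := hB k (ltn_ord k); lia.
- move=> i j k; rewrite !mxE /ent /= -!natrD; congr (_%:R).
  have := hA i (ltn_ord i); have := hA k (ltn_ord k); lia.
- move=> i j k l; rewrite !mxE /ent /= -!natrD; congr (_%:R); lia.
- move=> i j; exists ((nth 0 A i + nth 0 B j).+1)%N; rewrite mxE /ent /=; split => //.
  exact: Hb _ _ (mem_nth 0%N (iA i)) (mem_nth 0%N (iB j)).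
- move=> m /andP [m1 mn].
  have [x [y [xA yB e]]] := Hc m.-1 ltac:(lia).
  have ix : (index x A < n)%N by rewrite -szA index_mem.
  have iy : (index y B < n)%N by rewrite -szB index_mem.
  exists (Ordinal ix), (Ordinal iy); rewrite mxE /ent /= !nth_index //.
  congr (_%:R); lia.
- split.
  + move=> i j k jk; rewrite !mxE /ent /= ltr_nat ltnS ltn_add2l.
    by apply: (sorted_ltn_nth ltn_trans 0%N sB) => //; rewrite inE szB.
  + move=> i j k ik; rewrite !mxE /ent /= ltr_nat ltnS ltn_add2r.
    by apply: (sorted_ltn_nth ltn_trans 0%N sA) => //; rewrite inE szA.
- by move=> i j hi hj; rewrite mxE /ent /= hi hj A00 B00.
- move=> i j hi hj; rewrite mxE /ent /= hi hj A00 modn_small // B11; by [].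
Qed.

Lemma prs_spec (M : 'M[R]_n) : principal_reversible_square M ->
  exists A B, Spec p a a A B /\ M = mx R n (A, B).
Proof.
move=> [[_ V] [Hent Hsurj [Hrow Hcol] H00 H01]].
pose i0 : 'I_n := Ordinal n0.
pose j1 : 'I_n := Ordinal n2.
have ex i j : exists m : nat, M i j == m%:R.
  by have [m [_ ->]] := Hent i j; exists m.
pose E i j := xchoose (ex i j).
have EM i j : M i j = (E i j)%:R by apply/eqP; exact: (xchooseP (ex i j)).
have Eb i j : (1 <= E i j <= n ^ 2)%N.
  have [m [hm e]] := Hent i j.
  have -> : E i j = m by apply/eqP; rewrite -(eqr_nat R) -EM e.
  exact: hm.
have E00 : E i0 i0 = 1%N by apply/eqP; rewrite -(eqr_nat R) -EM H00.
have E01 : E i0 j1 = 2%N by apply/eqP; rewrite -(eqr_nat R) -EM H01 //= modn_small.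
have Ekey i j : E i j = (((E i i0).-1 + (E i0 j).-1).+1)%N.
  have := V i j i0 i0; rewrite !EM -!natrD => /eqP; rewrite eqr_nat E00 => /eqP.
  have := Eb i i0; have := Eb i0 j; clear; lia.
pose h (x : 'I_n * 'I_n) := E x.1 x.2.
have hinj : injective h.
  apply/injectiveP; rewrite /injectiveb /dinjectiveb.
  apply: (leq_size_uniq (iota_uniq 1 (n ^ 2))).
  - move=> z; rewrite mem_iota => /andP [z1 z2].
    have [i [j e]] := Hsurj z ltac:(apply/andP; split; clear -z1 z2; lia).
    apply/mapP; exists (i, j); first by rewrite mem_enum.
    by apply/eqP; rewrite /h /= -(eqr_nat R) -EM e.
  - by rewrite size_map -cardE card_prod card_ord size_iota expnS expn1.
pose Af k := (E (insubd i0 k) i0).-1.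
pose Bf k := (E i0 (insubd i0 k)).-1.
have nA (i : 'I_n) : nth 0%N (mkseq Af n) i = (E i i0).-1 by rewrite nth_mkseq // /Af valKd.
have nB (j : 'I_n) : nth 0%N (mkseq Bf n) j = (E i0 j).-1 by rewrite nth_mkseq // /Bf valKd.
have insK k (kn : (k < n)%N) : insubd i0 k = Ordinal kn by apply: val_inj; rewrite val_insubd kn.
have memA z : z \in mkseq Af n -> exists i : 'I_n, z = (E i i0).-1.
  move=> /mapP [k]; rewrite mem_iota add0n => /andP [_ kn] ->.
  by exists (Ordinal kn); rewrite /Af insK.
have memB z : z \in mkseq Bf n -> exists j : 'I_n, z = (E i0 j).-1.
  move=> /mapP [k]; rewrite mem_iota add0n => /andP [_ kn] ->.
  by exists (Ordinal kn); rewrite /Bf insK.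
have inA (i : 'I_n) : (E i i0).-1 \in mkseq Af n by rewrite -nA mem_nth // size_mkseq.
have inB (j : 'I_n) : (E i0 j).-1 \in mkseq Bf n by rewrite -nB mem_nth // size_mkseq.
have Elt_r (i k : 'I_n) : (i < k)%N -> ((E i i0).-1 < (E k i0).-1)%N.
  move=> ik; have := Hcol i i0 k ik; rewrite !EM ltr_nat.
  have := Eb i i0; have := Eb k i0; clear; lia.
have Elt_c (j k : 'I_n) : (j < k)%N -> ((E i0 j).-1 < (E i0 k).-1)%N.
  move=> jk; have := Hrow i0 j k jk; rewrite !EM ltr_nat.
  have := Eb i0 j; have := Eb i0 k; clear; lia.
exists (mkseq Af n), (mkseq Bf n); split; last first.
  by apply/matrixP => i j; rewrite mxE /ent /= nA nB EM -Ekey.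
split.
- rewrite /mkseq; apply: (homo_sorted_in (e := ltn) (P := [pred k | (k < n)%N])).
  + move=> k l; rewrite !inE => kn ln kl; rewrite /Af.
    by apply: Elt_r; rewrite !val_insubd kn ln.
  + by apply/allP => k; rewrite mem_iota inE add0n => /andP [].
  + exact: iota_ltn_sorted.
- rewrite /mkseq; apply: (homo_sorted_in (e := ltn) (P := [pred k | (k < n)%N])).
  + move=> k l; rewrite !inE => kn ln kl; rewrite /Bf.
    by apply: Elt_c; rewrite !val_insubd kn ln.
  + by apply/allP => k; rewrite mem_iota inE add0n => /andP [].
  + exact: iota_ltn_sorted.
- rewrite eN; split.
  + move=> z w /memA [i ->] /memB [j ->].
    have := Ekey i j; have := Eb i j; clear; lia.
  + move=> z zN.
    have [i [j e]] := Hsurj z.+1 ltac:(apply/andP; split; clear -zN; lia).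
    have eE : E i j = z.+1 by apply/eqP; rewrite -(eqr_nat R) -EM e.
    exists (E i i0).-1, (E i0 j).-1; split => //.
    by move: (Ekey i j); rewrite eE => -[].
  + move=> z w z' w' /memA [i ->] /memB [j ->] /memA [k ->] /memB [l ->] e.
    have : h (i, j) = h (k, l) by rewrite /h /= Ekey (Ekey k l) e.
    by move/hinj => [->].
- by rewrite !size_mkseq.
- by rewrite (negbTE (lt0n_neq0 a0)) /=; have := inB j1; rewrite E01.
Qed.

End Mat.

Theorem corollary4 (R : realType) (p a : nat) :
  prime p -> (0 < a)%N ->
  exists s : seq 'M[R]_(p ^ a),
    [/\ uniq s,
        (forall M : 'M[R]_(p ^ a), M \in s <-> principal_reversible_square M) &
        size s = 'C((2 * a).-1, a)].
Proof.
move=> hp a0.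
have N0 : (0 < p ^ (a + a))%N by rewrite expn_gt0 prime_gt0.
have n0 : (0 < p ^ a)%N by rewrite expn_gt0 prime_gt0.
exists [seq mx R (p ^ a) AB | AB <- dec p (a + a) a a]; split.
- rewrite map_inj_in_uniq; first exact: dec_uniq.
  move=> [A B] [A' B'] in1 in2 e.
  have [[sA sB HD [szA szB] _] _] := dec_sound hp (leqnn _) in1.
  have [[sA' sB' HD' [szA' szB'] _] _] := dec_sound hp (leqnn _) in2.
  have [A0 B0] := DS_0 N0 HD.
  have [A0' B0'] := DS_0 N0 HD'.
  have ent_eq (i j : 'I_(p ^ a)) :
      (nth 0 A i + nth 0 B j = nth 0 A' i + nth 0 B' j)%N.
    have := congr1 (fun M : 'M[R]_(p ^ a) => M i j) e; rewrite !mxE /ent /=.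
    by move/eqP; rewrite eqr_nat eqSS => /eqP.
  congr pair; apply: (@eq_from_nth _ 0%N); rewrite ?szA ?szA' ?szB ?szB' // => k kn.
    have := ent_eq (Ordinal kn) (Ordinal n0); rewrite /= (nth0_0 sB B0) (nth0_0 sB' B0').
    by rewrite !addn0.
  have := ent_eq (Ordinal n0) (Ordinal kn); rewrite /= (nth0_0 sA A0) (nth0_0 sA' A0').
  by rewrite !add0n.
- move=> M; split.
  + move=> /mapP [[A B] ABin ->].
    have [HS [symA [symB _]]] := dec_sound hp (leqnn _) ABin.
    exact: spec_prs.
  + move=> /(prs_spec hp a0) [A [B [HS ->]]].
    by apply: map_f; apply: dec_complete.
- by rewrite size_map dec_size // addnn mul2n.
Qed.
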